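(* Let $(\Delta,\mathfrak o,m,q)$ be a quantized Brauer graph, $G$ a finite abelian group and $W:\mathcal Z_\Delta\to G$ a Brauer weighting. Then the canonical action of $G$ on $\Delta_W$ is a free Brauer action on the quantized Brauer covering graph $(\Delta_W,\mathfrak o_W,m_W,q_W)$; that is, it is a free Brauer action on $(\Delta_W,\mathfrak o_W,m_W)$ and, for every edge $i_g$ of $\Delta_W$ with endpoints $\mu_d,\nu_e$ not truncated at either endpoint, and every $h\in G$, $$\frac{q_W(i_g,\mu_d)}{q_W(i_g,\nu_e)}=\frac{q_W\big((i_g)^h,(\mu_d)^h\big)}{q_W\big((i_g)^h,(\nu_e)^h\big)}.$$
   Context: Brauer graphs. A Brauer graph $(\Gamma,\mathfrak o,m)$ is a finite connected graph $\Gamma$ (loops and multiple edges allowed) with vertex set $\Gamma_0$, edge set $\Gamma_1$ and at least one edge, together with a multiplicity function $m:\Gamma_0\to\mathbb Z_{\ge 1}$ and, for each vertex $\mu$, a cyclic ordering $\mathfrak o$ of the edges incident with $\mu$. A loop at $\mu$ occurs twice in the cyclic ordering at $\mu$; its two occurrences are regarded as two distinct elements of $\Gamma_1$ (each with its own successor). Edge $j$ is the successor of edge $i$ at $\mu$ if $j$ immediately follows $i$ in the cyclic ordering at $\mu$. The valency $\operatorname{val}(\mu)$ is the number of edges incident with $\mu$, loops counted twice; if $\operatorname{val}(\mu)=1$ the unique edge at $\mu$ is its own successor. An edge $i$ is truncated at its endpoint $\mu$ if $\operatorname{val}(\mu)=1$ and $m(\mu)=1$. Fix a field $K$. A quantized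 Brauer graph $(\Gamma,\mathfrak o,m,q)$ is a Brauer graph with a function $q:\mathcal X_\Gamma\to K\setminus\{0\}$, $(i,\mu)\mapsto q_{i,\mu}$, where $\mathcal X_\Gamma$ is the set of pairs $(i,\mu)$ with $\mu$ an endpoint of $i$ and $i$ not truncated at either of its endpoints. Brauer actions. Let $G$ be a finite abelian group. A Brauer action of $G$ on $(\Gamma,\mathfrak o,m)$ is a faithful action $x\mapsto x^g$ of $G$ on the graph $\Gamma$ (on vertices and edges, compatible with incidence) such that for all $g\in G$: if $j$ is the successor of $i$ at $\mu$ then $j^g$ is the successor of $i^g$ at $\mu^g$, and $m(\mu^g)=m(\mu)$. It is a free Brauer action if $G$ acts freely on $\Gamma_1$. Successor weightings. For a Brauer graph $(\Delta,\mathfrak o,m)$ and $\mu\in\Delta_0$ let $\mathcal Z_\mu$ be the set of pairs $(i,j)$ of edges with $j$ the successor of $i$ at $\mu$, and $\mathcal Z_\Delta=\bigsqcup_{\mu\in\Delta_0}\mathcal Z_\mu$ (disjoint union). A successor weighting is a function $W:\mathcal Z_\Delta\to G$. Put $\omega_\mu=\prod_{(i,j)\in\mathcal Z_\mu}W(i,j)$, let $\operatorname{ord}(\mu)$ be the order of $\omega_\mu$ in $G$, and $H_\mu=\langle\omega_\mu\rangle$. $W$ is a Brauer weighting if $\operatorname{ord}(\mu)$ divides $m(\mu)$ for all $\mu\in\Delta_0$. For each $\mu$, $\sim$ is the equivalence relation on the set of pairs $(i,H_\mu g)$ ($i$ incident with $\mu$, $g\in G$) generated by $(i,H_\mu g)\sim(j,H_\mu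 gW(i,j))$ whenever $j$ is the successor of $i$ at $\mu$; the class of $(i,H_\mu g)$ is $[i,H_\mu g]$, and $\mathcal D_\mu$ is the set of classes. Brauer covering graph. The graph $\Delta_W$ has vertices $\mu_d$ ($\mu\in\Delta_0$, $d\in\mathcal D_\mu$) and edges $i_g$ ($i\in\Delta_1$, $g\in G$). If $i$ has endpoints $\mu$ and $\nu$, then $i_g$ has endpoints $\mu_{[i,H_\mu g]}$ and $\nu_{[i,H_\nu g]}$; if $i$ is a loop at $\mu$ with its two occurrences $i,\hat i$, then $i_g$ has endpoints $\mu_{[i,H_\mu g]}$ and $\mu_{[\hat i,H_\mu g]}$. The cyclic ordering $\mathfrak o_W$ is defined by: if $j$ is the successor of $i$ at $\mu$, then $j_{gW(i,j)}$ is the successor of $i_g$ at $\mu_{[i,H_\mu g]}$. For a Brauer weighting, $m_W(\mu_d)=m(\mu)/\operatorname{ord}(\mu)$; $(\Delta_W,\mathfrak o_W,m_W)$ is the Brauer covering graph. Given a quantizing function $q$ on $\Delta$, $q_W(i_g,\mu_d)=q_{i,\mu}$, and $(\Delta_W,\mathfrak o_W,m_W,q_W)$ is the quantized Brauer covering graph. The canonical action of $G$ on $\Delta_W$ is $(\mu_{[i,H_\mu g]})^h=\mu_{[i,H_\mu gh]}$ and $(i_g)^h=i_{gh}$ for $h\in G$. *)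

(* Defs.v *)
From HB Require Import structures.
From mathcomp Require Import all_boot all_order all_algebra all_fingroup.
Set Implicit Arguments. Unset Strict Implicit. Unset Printing Implicit Defensive.

(* A graph has vertices V and edges E; each edge i has two ends         *)
(* (i,false) and (i,true) ("occurrences"/half-edges), with endpoints    *)
(* en i false, en i true.  A loop has both ends at the same vertex, so  *)
(* its two occurrences at that vertex are the two half-edges.           *)
(* The cyclic orderings are encoded by the successor map succ on        *)
(* half-edges: succ x is the successor of x at the vertex of x.         *)

Section BrauerGraph.
Variables (V E : finType) (en : E -> bool -> V).

Definition hvert (x : E * bool) : V := en x.1 x.2.

(* valency, loops counted twice *)
Definition valency (v : V) : nat := #|[set x : E * bool | hvert x == v]|.

Definition incident (i : E) (v : V) : bool := (en i false == v) || (en i true == v).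

Definition adj : rel V := fun u v =>
  [exists i : E, ((en i false == u) && (en i true == v))
              || ((en i true == u) && (en i false == v))].

Variable mult : V -> nat.

Definition truncated (i : E) (v : V) : bool :=
  [&& incident i v, valency v == 1 & mult v == 1].

Definition in_X (i : E) (v : V) : bool :=
  [&& incident i v, ~~ truncated i (en i false) & ~~ truncated i (en i true)].

Definition is_brauer_graph (succ : E * bool -> E * bool) : Prop :=
  [/\ injective succ,
      (forall x, hvert (succ x) = hvert x),
      (forall x y, hvert x = hvert y -> fconnect succ x y),
      (forall v, 0 < mult v) &
      (0 < #|E|) /\ (forall u v, connect adj u v)].

Definition quantizing (K : fieldType) (q : E -> V -> K) : Prop :=
  forall i v, in_X i v -> q i v != 0%R.

Definition is_brauer_action (succ : E * bool -> E * bool) (gT : finGroupType)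
  (aV : V -> gT -> V) (aE : E -> gT -> E) (aH : E * bool -> gT -> E * bool) : Prop :=
  ([/\ (forall v, aV v 1%g = v) /\ (forall v g h, aV v (g * h)%g = aV (aV v g) h),
      (forall i, aE i 1%g = i) /\ (forall i g h, aE i (g * h)%g = aE (aE i g) h),
      (forall x, aH x 1%g = x) /\ (forall x g h, aH x (g * h)%g = aH (aH x g) h) &
      (forall x g, (aH x g).1 = aE x.1 g)
        /\ (forall x g, aH (x.1, ~~ x.2) g = ((aH x g).1, ~~ (aH x g).2))
        /\ (forall x g, hvert (aH x g) = aV (hvert x) g)]) /\
  ([/\ (forall x g, succ (aH x g) = aH (succ x) g),
      (forall v g, mult (aV v g) = mult v) &
      (forall g, (forall v, aV v g = v) -> (forall i, aE i g = i) -> g = 1%g)]).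

Definition is_free_brauer_action succ gT aV aE aH : Prop :=
  @is_brauer_action succ gT aV aE aH /\ (forall i g, aE i g = i -> g = 1%g).

End BrauerGraph.

(* Z_Delta is indexed by half-edges: x <-> the pair (x, succ x).        *)

Section Covering.
Variables (V E : finType) (en : E -> bool -> V) (succ : E * bool -> E * bool).
Variables (gT : finGroupType) (W : E * bool -> gT).

Definition omega (v : V) : gT := \big[mulg/1%g]_(x | hvert en x == v) W x.
Definition ordv (v : V) : nat := #[omega v]%g.
Definition Hsub (v : V) : {set gT} := <[omega v]>%g.

Definition brauer_weighting (mult : V -> nat) : Prop :=
  forall v, ordv v %| mult v.

(* pairs (occurrence, coset) *)
Definition PT := ((E * bool) * {set gT})%type.
Definition stepW (p : PT) : PT := (succ p.1, (p.2 :* W p.1)%g).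
Definition relW : rel PT := fun p r => (stepW p == r) || (stepW r == p).

Definition clsW (x : E * bool) (g : gT) : {set PT} :=
  [set p | connect relW (x, (Hsub (hvert en x) :* g)%g) p].

Definition is_vertW (p : V * {set PT}) : bool :=
  [exists x, exists g, (hvert en x == p.1) && (p.2 == clsW x g)].

Definition VW := {p : V * {set PT} | is_vertW p}.

Lemma vertW_proof (x : E * bool) (g : gT) : is_vertW (hvert en x, clsW x g).
Proof. by apply/existsP; exists x; apply/existsP; exists g; rewrite !eqxx. Qed.

Definition vertW (x : E * bool) (g : gT) : VW := exist (fun p => is_vertW p) _ (vertW_proof x g).

Definition EW := (E * gT)%type.

Definition enW (e : EW) (b : bool) : VW := vertW (e.1, b) e.2.

(* successor: j_{g W(i,j)} is the successor of i_g *)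
Definition succW (y : EW * bool) : EW * bool :=
  let x := (y.1.1, y.2) in (((succ x).1, (y.1.2 * W x)%g), (succ x).2).

Definition multW (mult : V -> nat) (v : VW) : nat :=
  mult (val v).1 %/ ordv (val v).1.

Definition qW (K : fieldType) (q : E -> V -> K) (e : EW) (v : VW) : K :=
  q e.1 (val v).1.

Definition aEW (e : EW) (h : gT) : EW := (e.1, (e.2 * h)%g).
Definition aHW (y : EW * bool) (h : gT) : EW * bool := (aEW y.1 h, y.2).

End Covering.

(* Main.v *)
Require Import Defs.
From HB Require Import structures.
From mathcomp Require Import all_boot all_order all_algebra all_fingroup.
Set Implicit Arguments. Unset Strict Implicit. Unset Printing Implicit Defensive.

Section Aux.
Variables (V E : finType) (en : E -> bool -> V) (succ : E * bool -> E * bool).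
Variables (gT : finGroupType) (W : E * bool -> gT).

Definition trP (h : gT) (p : PT E gT) : PT E gT := (p.1, (p.2 :* h)%g).
Definition trS (h : gT) (S : {set PT E gT}) : {set PT E gT} := [set trP h p | p in S].

Definition aVW (v : VW en succ W) (h : gT) : VW en succ W :=
  insubd v ((val v).1, trS h (val v).2).

Lemma trP1 p : trP 1 p = p.
Proof. by case: p => a b; rewrite /trP /= rcoset1. Qed.

Lemma trPM g h p : trP (g * h) p = trP h (trP g p).
Proof. by case: p => a b; rewrite /trP /= rcosetM. Qed.

Lemma trPK h p : trP h^-1 (trP h p) = p.
Proof. by rewrite -trPM mulgV trP1. Qed.

Lemma trPKV h p : trP h (trP h^-1 p) = p.
Proof. by rewrite -trPM mulVg trP1. Qed.

Hypothesis comm : forall x y : gT, (x * y = y * x)%g.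

Lemma stepW_tr h p : stepW succ W (trP h p) = trP h (stepW succ W p).
Proof. by case: p => a b; rewrite /stepW /trP /= -!rcosetM comm. Qed.

Lemma relW_tr h p r : relW succ W p r -> relW succ W (trP h p) (trP h r).
Proof.
rewrite /relW !stepW_tr => /orP [/eqP -> | /eqP ->]; by rewrite eqxx ?orbT.
Qed.

Lemma connect_tr h p r : connect (relW succ W) p r ->
  connect (relW succ W) (trP h p) (trP h r).
Proof.
case/connectP => s; elim: s p => [|a s IH] p /=.
  by move=> _ ->.
case/andP => Hpa Hs Hr.
apply: connect_trans (IH a Hs Hr).
by apply: connect1; apply: relW_tr.
Qed.

Lemma clsW_tr x g h : clsW en succ W x (g * h) = trS h (clsW en succ W x g).
Proof.
apply/setP => p; rewrite /clsW inE.
have E0 : (x, (Hsub en W (hvert en x) :* (g * h))%g)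
        = trP h (x, (Hsub en W (hvert en x) :* g)%g) by rewrite /trP /= rcosetM.
apply/idP/idP.
  move=> Hc; apply/imsetP; exists (trP h^-1 p); last by rewrite trPKV.
  by rewrite inE -(trPK h (x, _)) -E0; apply: connect_tr.
case/imsetP => p0; rewrite inE => Hc ->; rewrite E0; exact: connect_tr.
Qed.

Lemma is_vertW_tr p h : is_vertW en succ W p -> is_vertW en succ W (p.1, trS h p.2).
Proof.
case/existsP => x /existsP [g /andP [/eqP e1 /eqP e2]].
apply/existsP; exists x; apply/existsP; exists (g * h)%g.
by rewrite /= e1 e2 clsW_tr !eqxx.
Qed.

Lemma val_aVW v h : val (aVW v h) = ((val v).1, trS h (val v).2).
Proof. by rewrite /aVW insubdK //; apply: is_vertW_tr; exact: valP. Qed.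

Lemma aVW_vert x g h : aVW (vertW en succ W x g) h = vertW en succ W x (g * h)%g.
Proof. by apply: val_inj; rewrite val_aVW /= clsW_tr. Qed.

End Aux.


Theorem proposition4p4 (K : fieldType) (V E : finType) (en : E -> bool -> V)
  (succ : E * bool -> E * bool) (mult : V -> nat) (q : E -> V -> K)
  (gT : finGroupType) (W : E * bool -> gT) :
  is_brauer_graph en mult succ ->
  quantizing en mult q ->
  abelian [set: gT] ->
  brauer_weighting en W mult ->
  exists aV : VW en succ W -> gT -> VW en succ W,
    (forall x g h, aV (vertW en succ W x g) h = vertW en succ W x (g * h)%g) /\
    is_free_brauer_action (enW en succ W) (@multW V E en succ gT W mult)
      (succW succ W) aV (@aEW E gT) (@aHW E gT) /\
    (forall (e : EW E gT) (h : gT),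
       ~~ truncated (enW en succ W) (@multW V E en succ gT W mult) e (enW en succ W e false) ->
       ~~ truncated (enW en succ W) (@multW V E en succ gT W mult) e (enW en succ W e true) ->
       (@qW V E en succ gT W K q e (enW en succ W e false)
          / @qW V E en succ gT W K q e (enW en succ W e true))%R
       = (@qW V E en succ gT W K q (aEW e h) (aV (enW en succ W e false) h)
          / @qW V E en succ gT W K q (aEW e h) (aV (enW en succ W e true) h))%R).
Proof.
move=> [_ _ _ _ [E0 _]] _ Hab _.
have comm : forall x y : gT, (x * y = y * x)%g.
  by move=> x y; apply: (centsP Hab); rewrite inE.
have [i0 _] : exists i0 : E, true.
  by case/card_gt0P: E0 => i _; exists i.
exists (@aVW V E en succ gT W).
split; first by move=> x g h; rewrite aVW_vert.
split; last first.
  by move=> e h _ _; rewrite /qW !(val_aVW comm).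
have freeE : forall (i : EW E gT) g, aEW i g = i -> g = 1%g.
  case=> a b g; rewrite /aEW => [[]] /eqP.
  by rewrite -{2}(mulg1 b) (inj_eq (mulgI b)) => /eqP.
split; last exact: freeE.
split.
- split; [split|split|split|split].
  + move=> v; apply: val_inj; rewrite (val_aVW comm) /trS.
    have -> : [set trP 1 p | p in (val v).2] = (val v).2.
      apply/setP => p; apply/imsetP/idP => [[p0 Hp ->]|Hp].
        by rewrite trP1.
      by exists p; rewrite ?trP1.
    by rewrite -surjective_pairing.
  + move=> v g h; apply: val_inj; rewrite !(val_aVW comm) /= /trS -imset_comp.
    by congr (_, _); apply: eq_imset => p /=; rewrite trPM.
  + by case=> a b; rewrite /aEW mulg1.
  + by case=> a b g h; rewrite /aEW mulgA.
  + by case=> [[a b] c]; rewrite /aHW /aEW mulg1.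
  + by case=> [[a b] c] g h; rewrite /aHW /aEW mulgA.
  + by [].
  + split; first by [].
    case=> [[a b] c] g; rewrite /hvert /aHW /aEW /enW /=.
    by rewrite aVW_vert.
- split.
  + case=> [[a b] c] g; rewrite /succW /aHW /aEW /=.
    by rewrite -!mulgA (comm g).
  + by move=> v g; rewrite /multW (val_aVW comm).
  + by move=> g _ /(_ (i0, 1%g)); apply: freeE.
Qed.
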